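(* If a spherical curve $P$ has an incoherent bigon, then $r(P)\le 1$.
   Context: A spherical curve is a smooth immersion $P:S^1\to S^2$ whose self-intersections are finitely many transverse double points, called crossings. It is oriented and has at least one crossing. Regions are the components of $S^2\setminus P(S^1)$, and edges are the arcs of the curve between consecutive crossings. An $n$-gon is a region bounded by $n$ edges; a bigon is a $2$-gon. A region is coherent if its boundary edges, with the orientations induced from $P$, all run in the same rotational direction around the region; otherwise it is incoherent. In Gauss-word terms, a bigon with crossings $y,z$ is coherent iff the word has the form $y z\,W_1\,z y\,W_2$, and incoherent iff it has the form $y z\,W_1\,y z\,W_2$. The Gauss word is the cyclic word of crossings met in one traversal of the curve; each crossing appears twice. Crossings $a,b$ are interlaced if their occurrences alternate $a\dots b\dots a\dots b$. A crossing is reducible if no crossing is interlaced with it; equivalently, only three distinct regions meet at it. $P$ is reducible if it has a reducible crossing, and reduced otherwise. The inverse-half-twisted splice $I$ at a crossing $p$ takes the curve with cyclic Gauss word $p\,A\,p\,B$ to the curve with Gauss word $\overline{A}\,B$, where $\overline{A}$ is $A$ reversed. Geometrically, $p$ is smoothed in the unique way giving a single closed curve, and the result is re-oriented. The reductivity $r(P)$ is the minimal number of successive applications of $I$ needed to reach a reducible spherical curve; $r(P)=0$ if $P$ is reducible. *)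

(* Defs.v *)
From mathcomp Require Import all_boot all_fingroup.
Set Implicit Arguments. Unset Strict Implicit. Unset Printing Implicit Defensive.

(* A spherical curve with >= 1 crossing is (up to isotopy) its image, a   *)
(* connected 4-regular graph cellularly embedded in S^2, whose            *)
(* straight-ahead walk is a single closed curve.  We encode it by darts   *)
(* (half-edges) D, the edge involution [alpha] and the rotation [sigma]   *)
(* around each crossing (vertex).  Faces (regions) are orbits of          *)
(* [phi := sigma \o alpha].  Going straight through a crossing is sigma^2. *)

Section Curves.
Variable D : finType.
Variables alpha sigma : {perm D}.

Definition phi (d : D) : D := sigma (alpha d).
Definition tau (d : D) : D := sigma (sigma (alpha d)). (* straight-ahead successor *)

Definition adj_rel : rel D := [rel x y | (y == alpha x) || (y == sigma x)].

Definition spherical_curve : Prop :=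
  [/\ (forall d, alpha (alpha d) = d /\ alpha d != d),
      (forall d, fingraph.order sigma d = 4),
      (forall d e, connect adj_rel d e),
      fcard sigma D + fcard phi D = fcard alpha D + 2     (* genus 0: V - E + F = 2 *)
    & fcard tau D = 2].                                   (* one component (two directions) *)

Definition crossing (d : D) : D := froot sigma d.

(* The orientation of P is given by a dart d0: the positively oriented    *)
(* (outgoing) darts are those in the tau-orbit of d0.                     *)
Definition forward (d0 d : D) : bool := fconnect tau d0 d.

(* A bigon: a region bounded by 2 edges.  It is incoherent iff its        *)
(* boundary edges do not all run in the same direction around it, i.e.    *)
(* the face-darts are not all forward nor all backward.                   *)
Definition incoherent_bigon (d0 d : D) : bool :=
  (fingraph.order phi d == 2) && (forward d0 d != forward d0 (phi d)).

Definition has_incoherent_bigon (d0 : D) : Prop :=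
  exists d, incoherent_bigon d0 d.

Definition gauss_word (d0 : D) : seq D :=
  [seq crossing (iter k tau d0) | k <- iota 0 (fingraph.order tau d0)].

End Curves.

(* Gauss-word combinatorics (words are cyclic; the definitions below are  *)
(* invariant under rotation for words in which each letter occurs twice). *)
Section Words.
Variable T : eqType.

(* letters strictly between the two occurrences of a *)
Definition between (w : seq T) (a : T) : seq T :=
  let r := drop (index a w).+1 w in take (index a r) r.

Definition interlaced (w : seq T) (a b : T) : bool :=
  (a != b) && (count_mem b (between w a) == 1).

Definition reducible_crossing (w : seq T) (p : T) : bool :=
  (p \in w) && ~~ has (interlaced w p) w.

Definition reducible (w : seq T) : bool := has (reducible_crossing w) w.

(* inverse-half-twisted splice: p A p B  |->  rev A ++ B *)
Definition splice (w : seq T) (p : T) : seq T :=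
  let c := drop (index p w).+1 w ++ take (index p w) w in   (* w = p c cyclically *)
  let A := take (index p c) c in
  let B := drop (index p c).+1 c in
  rev A ++ B.

(* reducible_within k w  <->  r(w) <= k : some sequence of at most k       *)
(* splices reaches a reducible curve.                                     *)
Fixpoint reducible_within (k : nat) (w : seq T) : bool :=
  reducible w ||
  (if k is k'.+1 then has (fun p => reducible_within k' (splice w p)) w else false).

End Words.

(* Main.v *)
Require Import Defs.
From mathcomp Require Import all_boot all_fingroup.
From mathcomp Require Import zify.
Set Implicit Arguments. Unset Strict Implicit. Unset Printing Implicit Defensive.
Section W.
Variable T : eqType.
Implicit Types (w s X Y : seq T) (a b : T).

Lemma red_bb s X Y b : s = X ++ b :: b :: Y -> b \notin X -> reducible s.
Proof.
move=> -> bX; apply/hasP; exists b; first by rewrite mem_cat inE eqxx orbT.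
rewrite /reducible_crossing mem_cat inE eqxx orbT /=.
apply/hasPn=> c _; rewrite /interlaced.
rewrite /between index_cat (negbTE bX) /= eqxx addn0.
rewrite -cat_rcons drop_size_cat ?size_rcons // /= eqxx take0.
by rewrite /= andbF.
Qed.

Lemma cnt2 a w1 w2 w3 : count_mem a (w1 ++ a :: w2 ++ a :: w3) <= 2 ->
  [/\ a \notin w1, a \notin w2 & a \notin w3].
Proof.
rewrite !count_cat /= eqxx /= count_cat /= eqxx /= => H.
move: H. set x := count_mem a w1. set y := count_mem a w2. set z := count_mem a w3.
by split; apply/count_memPn; rewrite -/x -/y -/z; lia.
Qed.

Lemma splice_dec a w1 w2 w3 : a \notin w1 -> a \notin w2 ->
  splice (w1 ++ a :: w2 ++ a :: w3) a = rev w2 ++ w3 ++ w1.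
Proof.
move=> a1 a2.
have Hi : index a (w1 ++ a :: w2 ++ a :: w3) = size w1.
  by rewrite index_cat (negbTE a1) /= eqxx addn0.
have Hd : drop (size w1).+1 (w1 ++ a :: w2 ++ a :: w3) = w2 ++ a :: w3.
  by rewrite -cat_rcons drop_size_cat ?size_rcons.
have Ht : take (size w1) (w1 ++ a :: w2 ++ a :: w3) = w1 by rewrite take_size_cat.
have Hj : index a (w2 ++ a :: w3 ++ w1) = size w2.
  by rewrite index_cat (negbTE a2) /= eqxx addn0.
rewrite /splice Hi Hd Ht -catA /= Hj take_size_cat //.
by rewrite -cat_rcons drop_size_cat ?size_rcons.
Qed.

Lemma word_dec x0 a b w1 w2 w3 :
  head x0 (w2 ++ a :: w3) = b -> head x0 (w3 ++ w1 ++ [:: a]) = b ->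
  count_mem a (w1 ++ a :: w2 ++ a :: w3) <= 2 ->
  count_mem b (w1 ++ a :: w2 ++ a :: w3) <= 2 ->
  reducible_within 1 (w1 ++ a :: w2 ++ a :: w3).
Proof.
move=> Hb1 Hb2 Ca Cb; have [a1 a2 a3] := cnt2 Ca.
case: w2 Hb1 a2 Ca Cb => [|c w2] /= Hb1 a2 Ca Cb.
  by apply/orP; left; apply: (@red_bb _ w1 w3 a).
subst c; apply/orP; right; apply/hasP; exists a.
  by rewrite mem_cat inE eqxx orbT.
rewrite orbF (@splice_dec a w1 (b :: w2) w3) // rev_cons.
have bw2 : b \notin w2.
  clear Ca; case: w3 Hb2 Cb a3 => [|d w3] /= Hb2 Cb a3.
    case: w1 Hb2 Cb a1 => [|e w1] /= Hb2 Cb a1.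
      by move: a2; rewrite -Hb2 inE eqxx.
    subst e; apply/count_memPn; move: Cb.
    by rewrite /= eqxx !count_cat /= !count_cat /= eqxx; lia.
  subst d; apply/count_memPn; move: Cb.
  by rewrite !count_cat /= !count_cat /= !eqxx; lia.
case: w3 Hb2 {Ca Cb a3} => [|d w3] /= Hb2.
  case: w1 Hb2 a1 => [|e w1] /= Hb2 a1.
    by move: a2; rewrite -Hb2 inE eqxx.
  subst e; apply: (@red_bb _ (rev w2) w1 b).
    by rewrite cat_rcons.
  by rewrite mem_rev.
subst d; apply: (@red_bb _ (rev w2) (w3 ++ w1) b).
  by rewrite cat_rcons.
by rewrite mem_rev.
Qed.
Lemma word_pos w x0 a b i j : i < j -> j < size w ->
  nth x0 w i = a -> nth x0 w j = a -> nth x0 w i.+1 = b ->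
  nth x0 w (if j.+1 == size w then 0 else j.+1) = b ->
  count_mem a w <= 2 -> count_mem b w <= 2 -> reducible_within 1 w.
Proof.
move=> ij jn Hi Hj Hbi Hbj.
have i_n : i < size w by apply: ltn_trans jn.
set w1 := take i w; set w2 := take (j - i.+1) (drop i.+1 w); set w3 := drop j.+1 w.
have Hw : w = w1 ++ a :: w2 ++ a :: w3.
  rewrite /w1 /w2 /w3 -{1}(cat_take_drop i w) (drop_nth x0) // Hi.
  congr (_ ++ _ :: _).
  rewrite -{1}(cat_take_drop (j - i.+1) (drop i.+1 w)) drop_drop subnK //.
  by rewrite (drop_nth x0 jn) Hj.
have s1 : size w1 = i by rewrite size_takel // ltnW.
have s2 : size w2 = j - i.+1 by rewrite size_takel // size_drop leq_sub2r // ltnW.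
rewrite Hw; apply: (word_dec (x0 := x0)); rewrite -?Hw //.
  rewrite -Hbi Hw nth_cat s1 ltnNge leqnSn /= subSn // subnn /=.
  by case: (w2 ++ a :: w3).
move: Hbj; case: eqP => [Ej|Nj].
  have e3 : w3 = [::] by apply/eqP; rewrite -size_eq0 /w3 size_drop Ej subnn.
  by rewrite e3 Hw /=; case: w1 {Hw s1}.
have Ej : j.+1 < size w by rewrite ltn_neqAle jn andbT; apply/eqP.
rewrite Hw nth_cat s1 ltnNge (leq_trans (ltnW ij)) // /=.
have -> : j.+1 - i = (j - i.+1).+2 by lia.
rewrite /= nth_cat s2 ltnNge leqnSn /= subSn // subnn /=.
have : 0 < size w3 by rewrite /w3 size_drop subn_gt0.
by clear Hw; case: w3.
Qed.
End W.
Section C.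
Variable D : finType.
Variables alpha sigma : {perm D}.
Hypothesis HA : forall d, alpha (alpha d) = d.
Hypothesis HA2 : forall d, alpha d != d.
Hypothesis HS : forall d, fingraph.order sigma d = 4.
Hypothesis HT : fcard (tau alpha sigma) D = 2.
Local Notation t := (tau alpha sigma).

Lemma tau_inj : injective t.
Proof. by move=> x y; rewrite /tau => /perm_inj/perm_inj/perm_inj. Qed.

Lemma s4 d : sigma (sigma (sigma (sigma d))) = d.
Proof. by have := iter_order (@perm_inj _ sigma) d; rewrite HS. Qed.

Lemma s2neq d : sigma (sigma d) != d.
Proof.
apply/eqP=> E; have := fingraph.orbit_uniq sigma d.
rewrite /fingraph.orbit HS /= E. by rewrite !inE eqxx /= ?orbT.
Qed.

Lemma tau_alpha y : t (alpha y) = sigma (sigma y).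
Proof. by rewrite /tau HA. Qed.

Lemma tau_alpha_tau y : t (alpha (t y)) = alpha y.
Proof. by rewrite tau_alpha /tau s4. Qed.

Lemma iter_alpha x k j : iter k t x = alpha x -> j <= k ->
  alpha (iter j t x) = iter (k - j) t x.
Proof.
move=> Hk; elim: j => [|j IH] Hj; first by rewrite subn0 Hk.
have Hkj : k - j = (k - j.+1).+1 by rewrite subnS prednK // subn_gt0.
apply: tau_inj; rewrite iterS tau_alpha_tau -iterS -Hkj -IH ?HA //.
exact: ltnW.
Qed.

Lemma no_self x : ~~ fconnect t x (alpha x).
Proof.
apply/negP=> /iter_findex; set k := findex _ _ _ => Hk.
have Hd : k = k./2 + k./2 + odd k by rewrite addnn addnC odd_double_half.
have Hm : k./2 <= k by rewrite {2}Hd -addnA leq_addr.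
have := iter_alpha Hk Hm.
case Ho: (odd k) Hd => Hd.
- have -> : k - k./2 = (k./2).+1.
    by rewrite {1}Hd /= addn1 subSn ?leq_addr // addKn.
  rewrite iterS; set u := iter _ _ _ => E. have := s2neq (alpha u).
  by rewrite {2}E /tau eqxx.
- have -> : k - k./2 = k./2 by rewrite {1}Hd /= addn0 addnK.
  move=> E; have := HA2 (iter k./2 t x).
  by rewrite E eqxx.
Qed.
Lemma fsym : connect_sym (frel t).
Proof. exact: fconnect_sym tau_inj. Qed.

Lemma two_orbits d0 x : fconnect t d0 x || fconnect t d0 (alpha x).
Proof.
apply/negPn/negP; rewrite negb_or => /andP[N1 N2].
have N3 := no_self x.
pose r0 := froot t d0; pose r1 := froot t x; pose r2 := froot t (alpha x).
have D01 : r0 != r1 by rewrite /r0 /r1 (root_connect fsym).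
have D02 : r0 != r2 by rewrite /r0 /r2 (root_connect fsym).
have D12 : r1 != r2 by rewrite /r1 /r2 (root_connect fsym).
have : 3 <= fcard t D; last by rewrite HT.
rewrite /n_comp_mem.
have U : uniq [:: r0; r1; r2] by rewrite /= !inE negb_or D01 D02 D12.
rewrite -[3]/(size [:: r0; r1; r2]) -(card_uniqP U).
apply: subset_leq_card; apply/subsetP=> y; rewrite !inE.
by case/or3P=> /eqP->; rewrite /= (roots_root fsym).
Qed.

Lemma fwd_alpha d0 x : forward alpha sigma d0 (alpha x) = ~~ forward alpha sigma d0 x.
Proof.
rewrite /forward; have := two_orbits d0 x; have := no_self x.
case E: (fconnect t d0 x) => /= N; last by move=> ->.
move=> _; apply/negbTE/negP=> H; case/negP: N.
by apply: connect_trans H; rewrite fconnect_sym; [exact: E|exact: tau_inj].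
Qed.

Lemma s1neq d : sigma d != d.
Proof.
apply/eqP=> E; have := fingraph.orbit_uniq sigma d.
rewrite /fingraph.orbit HS /= E. by rewrite !inE eqxx.
Qed.

Lemma fwd_s2 d0 x : forward alpha sigma d0 (sigma (sigma x)) = ~~ forward alpha sigma d0 x.
Proof.
rewrite -fwd_alpha /forward; apply: (same_connect_r fsym).
by rewrite (fconnect_sym tau_inj) -tau_alpha fconnect1.
Qed.

Lemma cross_s y : crossing sigma (sigma y) = crossing sigma y.
Proof.
apply/eqP; rewrite /crossing (root_connect (fconnect_sym (@perm_inj _ sigma))).
by rewrite (fconnect_sym (@perm_inj _ sigma)) fconnect1.
Qed.

Lemma gauss_orbit d0 :
  gauss_word alpha sigma d0 = map (crossing sigma) (fingraph.orbit t d0).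
Proof.
apply: (@eq_from_nth _ d0).
  by rewrite /gauss_word !size_map size_iota fingraph.size_orbit.
move=> k; rewrite /gauss_word size_map size_iota => Hk.
rewrite (nth_map 0) ?size_iota // (nth_map d0) ?fingraph.size_orbit //.
by rewrite nth_iota // add0n /fingraph.orbit nth_traject.
Qed.

Lemma count_le2 d0 a : count_mem a (gauss_word alpha sigma d0) <= 2.
Proof.
rewrite gauss_orbit count_map -size_filter.
pose y1 := if forward alpha sigma d0 a then a else sigma (sigma a).
pose y2 := if forward alpha sigma d0 (sigma a) then sigma a else sigma (sigma (sigma a)).
rewrite -[2]/(size [:: y1; y2]); apply: uniq_leq_size.
  by rewrite filter_uniq // fingraph.orbit_uniq.
move=> y; rewrite mem_filter /= -fconnect_orbit => /andP[/eqP Ca Fy].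
have Hsy : fconnect sigma a y.
  by rewrite -Ca (fconnect_sym (@perm_inj _ sigma)); apply: connect_root.
change (is_true (forward alpha sigma d0 y)) in Fy.
have := iter_findex Hsy; have := findex_max Hsy; rewrite HS.
case: (findex sigma a y) => [|[|[|[|k]]]] //= _ E; subst y;
  rewrite !inE /y1 /y2.
- by rewrite Fy eqxx.
- by rewrite Fy eqxx orbT.
- by rewrite fwd_s2 in Fy; rewrite (negbTE Fy) eqxx.
- by rewrite fwd_s2 in Fy; rewrite (negbTE Fy) eqxx orbT.
Qed.

Lemma nth_gauss d0 k : k < fingraph.order t d0 ->
  nth d0 (gauss_word alpha sigma d0) k = crossing sigma (iter k t d0).
Proof.
move=> Hk; rewrite gauss_orbit (nth_map d0) ?fingraph.size_orbit //.
by rewrite /fingraph.orbit nth_traject.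
Qed.

Lemma size_gauss d0 : size (gauss_word alpha sigma d0) = fingraph.order t d0.
Proof. by rewrite gauss_orbit size_map fingraph.size_orbit. Qed.

Lemma pairs d0 x x' :
  forward alpha sigma d0 x -> forward alpha sigma d0 x' -> x != x' ->
  crossing sigma x = crossing sigma x' ->
  crossing sigma (t x) = crossing sigma (t x') ->
  reducible_within 1 (gauss_word alpha sigma d0).
Proof.
wlog ij : x x' / findex t d0 x < findex t d0 x'.
  move=> W Fx Fx' Nx Ec Et.
  have : findex t d0 x != findex t d0 x'.
    apply: contra Nx => /eqP E.
    by rewrite -(iter_findex Fx) -(iter_findex Fx') E.
  rewrite neq_ltn => /orP[H|H]; first by apply: (W x x').
  by apply: (W x' x) => //; rewrite eq_sym.
move=> Fx Fx' Nx Ec Et.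
set i := findex t d0 x in ij; set j := findex t d0 x' in ij.
have jn : j < fingraph.order t d0 by apply: findex_max.
have ix : iter i t d0 = x by apply: iter_findex.
have jx : iter j t d0 = x' by apply: iter_findex.
apply: (@word_pos _ _ d0 (crossing sigma x) (crossing sigma (t x)) i j) => //.
- by rewrite size_gauss.
- by rewrite nth_gauss ?ix // (ltn_trans ij).
- by rewrite nth_gauss ?jx.
- rewrite nth_gauss; [by rewrite iterS ix | exact: leq_ltn_trans ij jn].
- rewrite size_gauss; case: eqP => [E|N].
    by rewrite nth_gauss ?order_gt0 // Et -jx -iterS E iter_order //; exact: tau_inj.
  have Hj : j.+1 < fingraph.order t d0 by rewrite ltn_neqAle jn andbT; apply/eqP.
  by rewrite nth_gauss // iterS jx.
- exact: count_le2.
- exact: count_le2.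
Qed.
Lemma main_sec d0 d : fingraph.order (phi alpha sigma) d = 2 ->
  forward alpha sigma d0 d != forward alpha sigma d0 (phi alpha sigma d) ->
  reducible_within 1 (gauss_word alpha sigma d0).
Proof.
move=> Ho Hf.
have phi_inj : injective (phi alpha sigma).
  by move=> u v; rewrite /phi => /perm_inj/perm_inj.
have E2 : sigma (alpha (sigma (alpha d))) = d.
  by have := iter_order phi_inj d; rewrite Ho.
move: Hf; rewrite /phi; case F: (forward alpha sigma d0 d) => /= Hf.
- apply: (@pairs d0 d (alpha (sigma (alpha d)))) => //.
  + by rewrite fwd_alpha; move: Hf; case: (forward alpha sigma d0 (sigma (alpha d))).
  + apply/eqP=> E; have := s1neq d; by rewrite {1}E E2 eqxx.
  + by rewrite -{1}E2 cross_s.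
  + by rewrite /tau HA !cross_s.
- apply: (@pairs d0 (alpha d) (sigma (alpha d))) => //.
  + by rewrite fwd_alpha F.
  + by move: Hf; case: (forward alpha sigma d0 (sigma (alpha d))).
  + by rewrite eq_sym s1neq.
  + by rewrite cross_s.
  + by rewrite /tau HA !cross_s -{1}E2 cross_s.
Qed.
End C.

Theorem mainTheorem2 (D : finType) (alpha sigma : {perm D}) (d0 : D) :
  spherical_curve alpha sigma ->
  has_incoherent_bigon alpha sigma d0 ->
  reducible_within 1 (gauss_word alpha sigma d0).
Proof.
case=> Hal HS _ _ HT [d /andP[/eqP Ho Hf]].
have HA : forall d, alpha (alpha d) = d by move=> e; case: (Hal e).
have HA2 : forall d, alpha d != d by move=> e; case: (Hal e).
exact: (main_sec HA HA2 HS HT Ho Hf).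
Qed.
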